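(* Let $Q$ be a connected quiver and $W$ a complex vector space of dimension $n$. The moduli space of invertible quiver representations $\mathcal{M}^{inv}_W(Q)=\mathcal{R}^{inv}_W(Q)/\!\!/G_W(Q)$ is isomorphic, as an affine algebraic variety, to the character variety $\mathrm{Hom}(F_r,\mathsf{GL}(n,\mathbb{C}))/\!\!/\mathsf{GL}(n,\mathbb{C})$, where $r=b_1(Q)$ and $F_r$ is the free group of rank $r$.
   Context: A quiver $Q=(Q_V,Q_A)$ is a finite directed graph; each arrow $a$ has head $h_a$ and tail $t_a$; $b_1(Q)$ is the rank of $H_1(Q,\mathbb{Z})$ of its underlying 1-dimensional CW complex. $\mathcal{R}_W(Q)=\bigoplus_{a\in Q_A}\mathrm{End}(W)$, and $G_W(Q)=\mathsf{GL}(W)^{Q_V}$ acts by $(g\cdot x)(a)=g_{h_a}x(a)g_{t_a}^{-1}$. $\mathcal{R}^{inv}_W(Q)\subset\mathcal{R}_W(Q)$ is the set of $x$ with $x(a)\in\mathsf{GL}(W)$ for all $a$; the GIT quotient is taken for the $G_W(Q)$-action. The character variety is the GIT quotient by simultaneous conjugation. *)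

(* Defs.v *)
From mathcomp Require Import all_boot all_algebra.
From mathcomp Require Import complex.
From mathcomp Require Import Rstruct.
From Stdlib Require Import Reals.

Set Implicit Arguments.
Unset Strict Implicit.
Unset Printing Implicit Defensive.

Import GRing.Theory Num.Theory.
Local Open Scope ring_scope.

Definition C : numClosedFieldType := Rdefinitions.R[i].

(* A quiver is given by a finite vertex type V, a finite arrow type A, and   *)
(* head / tail maps h t : A -> V.                                            *)

Definition quiver_adj (V A : finType) (h t : A -> V) : rel V :=
  fun x y => [exists a : A, ((h a == x) && (t a == y)) || ((t a == x) && (h a == y))].

Definition quiver_connected (V A : finType) (h t : A -> V) : Prop :=
  (leq 1 #|V|) /\ forall u v : V, connect (quiver_adj h t) u v.

(* Boundary map d_1 : Z^{Q_A} -> Z^{Q_V} of the 1-dimensional CW complex,    *)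
(* d_1(a) = h_a - t_a, written as a matrix (row a = image of a) over Q.      *)
Definition boundary_mx (V A : finType) (h t : A -> V) : 'M[rat]_(#|A|, #|V|) :=
  \matrix_(i < #|A|, j < #|V|)
     ((enum_val j == h (enum_val i))%:R - (enum_val j == t (enum_val i))%:R).

(* b_1(Q) = rank of H_1(Q, Z) = rank of ker d_1 = #|Q_A| - rank(d_1). *)
Definition b1 (V A : finType) (h t : A -> V) : nat :=
  subn #|A| (\rank (boundary_mx h t)).

Definition GLtup (I : Type) (n : nat) :=
  {x : I -> 'M[C]_n | forall i, x i \in unitmx}.

(* Regular functions on the affine variety GL(n,C)^I : the C-algebra         *)
(* generated by the matrix entries and the inverses of the determinants,     *)
Inductive regular (I : finType) (n : nat) : (GLtup I n -> C) -> Prop :=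
| reg_const (c : C) : regular (fun _ => c)
| reg_entry (i : I) (j k : 'I_n) : regular (fun x => sval x i j k)
| reg_invdet (i : I) : regular (fun x => (\det (sval x i))^-1)
| reg_add f g : regular f -> regular g -> regular (fun x => f x + g x)
| reg_mul f g : regular f -> regular g -> regular (fun x => f x * g x).

Definition quiver_invariant (V A : finType) (h t : A -> V) (n : nat)
    (f : GLtup A n -> C) : Prop :=
  forall (g : V -> 'M[C]_n) (x : GLtup A n), (forall v, g v \in unitmx) ->
  forall hy : (forall a, (g (h a) *m sval x a *m invmx (g (t a))) \in unitmx),
    f (exist _ (fun a => g (h a) *m sval x a *m invmx (g (t a))) hy) = f x.

(* Coordinate ring of the GIT quotient M^inv_W(Q) = R^inv_W(Q) // G_W(Q):   *)
(* the G_W(Q)-invariant regular functions on R^inv_W(Q).                     *)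
Definition quiver_inv_fun (V A : finType) (h t : A -> V) (n : nat)
    (f : GLtup A n -> C) : Prop :=
  regular f /\ quiver_invariant h t f.

(* Hom(F_r, GL(n,C)) = GL(n,C)^r (images of the free generators), with       *)
(* GL(n,C) acting by simultaneous conjugation.                               *)
Definition conj_invariant (r n : nat) (f : GLtup 'I_r n -> C) : Prop :=
  forall (g : 'M[C]_n) (x : GLtup 'I_r n), g \in unitmx ->
  forall hy : (forall i, (g *m sval x i *m invmx g) \in unitmx),
    f (exist _ (fun i => g *m sval x i *m invmx g) hy) = f x.

(* Coordinate ring of the character variety Hom(F_r, GL(n,C)) // GL(n,C). *)
Definition charvar_fun (r n : nat) (f : GLtup 'I_r n -> C) : Prop :=
  regular f /\ conj_invariant f.

(* An isomorphism of C-algebras between two subalgebras P, Q of function   *)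
(* algebras (X -> C), (Y -> C) (operations pointwise).  Affine varieties    *)
(* are isomorphic iff their coordinate rings are isomorphic C-algebras.      *)
Definition calg_iso (X Y : Type) (P : (X -> C) -> Prop) (Q : (Y -> C) -> Prop)
    (phi : (X -> C) -> (Y -> C)) : Prop :=
  [/\ (forall f, P f -> Q (phi f)),
      (forall f1 f2, P f1 -> P f2 -> phi f1 = phi f2 -> f1 = f2),
      (forall F, Q F -> exists2 f, P f & phi f = F),
      (forall c : C, phi (fun _ => c) = (fun _ => c)) &
      (forall f1 f2, P f1 -> P f2 ->
         phi (fun x => f1 x + f2 x) = (fun y => phi f1 y + phi f2 y) /\
         phi (fun x => f1 x * f2 x) = (fun y => phi f1 y * phi f2 y))].

(* Main.v *)
Require Import Defs.
From mathcomp Require Import all_boot all_algebra.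
From mathcomp Require Import zify.
From Stdlib Require Import Lia FunctionalExtensionality ProofIrrelevance.
Set Implicit Arguments. Unset Strict Implicit. Unset Printing Implicit Defensive.
Import GRing.Theory Num.Theory.
Local Open Scope ring_scope.
Section Reg.
Context (I : finType) (n : nat).
Local Notation reg := (@regular I n).

Lemma reg_eq f g : (forall x, g x = f x) -> reg f -> reg g.
Proof. by move=> E; have -> : g = f by apply: functional_extensionality. Qed.

Ltac regrw t := eapply reg_eq; [move=> ? /=; t; reflexivity|].

Lemma reg_sum (J : Type) (s : seq J) (P : pred J) (F : J -> GLtup I n -> C) :
  (forall j, reg (F j)) -> reg (fun x => \sum_(j <- s | P j) F j x).
Proof.
move=> HF; elim: s => [|j s IH].
  by regrw ltac:(rewrite big_nil); apply: reg_const.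
regrw ltac:(rewrite big_cons).
case: (P j) => //; exact: reg_add.
Qed.

Lemma reg_prod (J : Type) (s : seq J) (P : pred J) (F : J -> GLtup I n -> C) :
  (forall j, reg (F j)) -> reg (fun x => \prod_(j <- s | P j) F j x).
Proof.
move=> HF; elim: s => [|j s IH].
  by regrw ltac:(rewrite big_nil); apply: reg_const.
regrw ltac:(rewrite big_cons).
case: (P j) => //; exact: reg_mul.
Qed.

Definition regM m p (M : GLtup I n -> 'M[C]_(m, p)) := forall i j, reg (fun x => M x i j).
Definition regU (M : GLtup I n -> 'M[C]_n) :=
  [/\ regM M, reg (fun x => (\det (M x))^-1) & forall x, M x \in unitmx].

Lemma reg_det m (M : GLtup I n -> 'M[C]_m) : regM M -> reg (fun x => \det (M x)).
Proof.
move=> HM; rewrite /determinant.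
apply: reg_sum => s.
apply: reg_mul; first exact: reg_const.
apply: reg_prod => i; exact: HM.
Qed.

Lemma regM_mul (M N : GLtup I n -> 'M[C]_n) : regM M -> regM N -> regM (fun x => M x *m N x).
Proof.
move=> HM HN i j; regrw ltac:(rewrite mxE).
apply: reg_sum => k; exact: reg_mul.
Qed.

Lemma regU_mul (M N : GLtup I n -> 'M[C]_n) : regU M -> regU N -> regU (fun x => M x *m N x).
Proof.
case=> HM dM uM [HN dN uN]; split.
- exact: regM_mul.
- regrw ltac:(rewrite det_mulmx invfM); exact: reg_mul.
- by move=> x; rewrite unitmx_mul uM uN.
Qed.

Lemma regM_inv (M : GLtup I n -> 'M[C]_n) : regU M -> regM (fun x => invmx (M x)).
Proof.
case=> HM dM uM i j; regrw ltac:(rewrite /invmx uM !mxE).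
apply: reg_mul => //; rewrite /cofactor; apply: reg_mul; first exact: reg_const.
apply: (@reg_det _ (fun x => row' j (col' i (M x)))) => k l; regrw ltac:(rewrite !mxE); exact: HM.
Qed.

Lemma regU_inv (M : GLtup I n -> 'M[C]_n) : regU M -> regU (fun x => invmx (M x)).
Proof.
move=> HU; have := HU; case=> HM dM uM; split.
- exact: regM_inv.
- regrw ltac:(rewrite det_inv invrK); exact: reg_det.
- by move=> x; rewrite unitmx_inv.
Qed.

Lemma regU_1 : regU (fun _ => 1%:M).
Proof.
split.
- move=> i j; exact: reg_const.
- exact: reg_const.
- by move=> x; exact: unitmx1.
Qed.

Lemma regU_entry (a : I) : regU (fun x => sval x a).
Proof.
split.
- move=> i j; exact: reg_entry.
- exact: reg_invdet.
- by move=> x; exact: (svalP x a).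
Qed.
End Reg.

Lemma reg_comp (I J : finType) n (Phi : GLtup J n -> GLtup I n) :
  (forall i, regU (fun y => sval (Phi y) i)) ->
  forall f, regular f -> regular (fun y => f (Phi y)).
Proof.
move=> HP f; elim=> {f}.
- move=> c; exact: reg_const.
- move=> i j k; by case: (HP i) => H _ _; exact: H.
- move=> i; by case: (HP i).
- move=> f g _ Hf _ Hg; exact: reg_add.
- move=> f g _ Hf _ Hg; exact: reg_mul.
Qed.

Section Tree.
Context (V A : finType) (h t : A -> V) (v0 : V).
Context (Hconn : forall u v, connect (quiver_adj h t) u v).
Local Notation adj := (quiver_adj h t).

Definition reachk v k : bool :=
  [exists p : k.-tuple V, path adj v0 p && (last v0 p == v)].

Lemma ex_reach v : exists k, reachk v k.
Proof.
have /connectP [p Hp Hl] := Hconn v0 v.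
exists (size p); apply/existsP; exists (in_tuple p) => /=.
by rewrite Hp -Hl eqxx.
Qed.

Definition dep v := ex_minn (ex_reach v).

Lemma dep_v0 : dep v0 = 0%N.
Proof.
rewrite /dep; case: ex_minnP => k _ Hm; apply/eqP; rewrite -leqn0.
apply: Hm; apply/existsP; exists [tuple] => /=; by rewrite eqxx.
Qed.

Lemma dep_reach v k : reachk v k -> (dep v <= k)%N.
Proof. by rewrite /dep; case: ex_minnP => m _ Hm; apply: Hm. Qed.

Lemma par_ex v : v != v0 -> exists u, adj u v && (dep u < dep v)%N.
Proof.
move=> Hv; have : reachk v (dep v) by rewrite /dep; case: ex_minnP.
case/existsP=> p /andP [Hp /eqP Hl].
case: p Hp Hl => q Hq /= Hp Hl.
move: Hq Hp Hl; case/lastP: q => [|q w] Hq Hp Hl.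
  by move: Hv; rewrite -Hl /= eqxx.
move: Hp; rewrite rcons_path => /andP [Hp Ha].
move: Hl; rewrite last_rcons => Hw; subst w.
exists (last v0 q); rewrite Ha /=.
have Hs : size q = (dep v).-1 by move/eqP: Hq; rewrite size_rcons => <-.
have Hd : (0 < dep v)%N by move/eqP: Hq; rewrite size_rcons => <-.
have : (dep (last v0 q) <= size q)%N.
  apply: dep_reach; apply/existsP; exists (in_tuple q); by rewrite /= Hp eqxx.
by rewrite Hs; case: (dep v) Hd => // m _.
Qed.

Definition par v := odflt v0 [pick u | adj u v && (dep u < dep v)%N].

Lemma par_spec v : v != v0 -> adj (par v) v && (dep (par v) < dep v)%N.
Proof.
move=> Hv; rewrite /par; case: pickP => [u Hu //|H0].
by have [u Hu] := par_ex Hv; rewrite H0 in Hu.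
Qed.

Definition pcond v a :=
  ((h a == par v) && (t a == v)) || ((t a == par v) && (h a == v)).

Definition pa v : option A := [pick a | pcond v a].

Lemma pa_spec v : v != v0 -> exists2 a, pa v = Some a & pcond v a.
Proof.
move=> Hv; have /andP [Ha _] := par_spec Hv.
rewrite /pa; case: pickP => [a Ha'|H0]; first by exists a.
by case/existsP: Ha => a Ha; move: (H0 a); rewrite /pcond Ha.
Qed.

Lemma par_neq v : v != v0 -> par v != v.
Proof.
move=> Hv; have /andP [_ Hd] := par_spec Hv.
by apply/eqP => E; rewrite E ltnn in Hd.
Qed.

Lemma pa_inj v w a : v != v0 -> w != v0 -> pa v = Some a -> pa w = Some a -> v = w.
Proof.
move=> Hv Hw Pv Pw.
have Cv : pcond v a by move: Pv; rewrite /pa; case: pickP => // b Hb [<-].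
have Cw : pcond w a by move: Pw; rewrite /pa; case: pickP => // b Hb [<-].
have /andP [_ Dv] := par_spec Hv; have /andP [_ Dw] := par_spec Hw.
apply/eqP; apply/negP => /negP Hvw.
move: Cv Cw; rewrite /pcond => /orP [] /andP [/eqP E1 /eqP E2] /orP [] /andP [/eqP E3 /eqP E4].
- by move: Hvw; rewrite -E2 -E4 eqxx.
- have Ew : w = par v by rewrite -E4 E1.
  have Ev : v = par w by rewrite -E2 E3.
  by move: Dv Dw; rewrite -Ew -Ev => D1 D2; move: (ltn_trans D1 D2); rewrite ltnn.
- have Ew : w = par v by rewrite -E4 E1.
  have Ev : v = par w by rewrite -E2 E3.
  by move: Dv Dw; rewrite -Ew -Ev => D1 D2; move: (ltn_trans D1 D2); rewrite ltnn.
- by move: Hvw; rewrite -E2 -E4 eqxx.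
Qed.

Definition T := [set a | [exists v, (v != v0) && (pa v == Some a)]].
Definition child a := odflt v0 [pick v | (v != v0) && (pa v == Some a)].

Lemma child_spec a : a \in T -> (child a != v0) && (pa (child a) == Some a).
Proof.
rewrite inE /child => /existsP [v Hv]; case: pickP => [u Hu //|H0].
by rewrite H0 in Hv.
Qed.

Lemma card_T : #|T| = #|V|.-1.
Proof.
have inj : {in T &, injective child}.
  move=> a b Ha Hb E; have /andP [Ca /eqP Pa] := child_spec Ha.
  have /andP [Cb /eqP Pb] := child_spec Hb.
  by move: Pb; rewrite -E Pa => -[].
rewrite -(card_in_imset inj).
have -> : [set child x | x in T] = [set~ v0].
  apply/setP => v; rewrite !inE; apply/imsetP/idP.
    by case=> a Ha ->; have /andP [] := child_spec Ha.
  move=> Hv; have [a Pa _] := pa_spec Hv.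
  have Ha : a \in T by rewrite inE; apply/existsP; exists v; rewrite Hv Pa eqxx.
  exists a => //; have /andP [Ca /eqP Pc] := child_spec Ha.
  exact: (pa_inj Hv Ca Pa Pc).
by rewrite cardsC1.
Qed.


Lemma sum_delta (u : 'rV[rat]_#|V|) (x : V) :
  \sum_j u 0 j * (enum_val j == x)%:R = u 0 (enum_rank x).
Proof.
rewrite (bigD1 (enum_rank x)) //= enum_rankK eqxx mulr1 big1 ?addr0 //.
move=> j Hj; case: eqP => [E|]; last by rewrite mulr0.
by move: Hj; rewrite -E enum_valK eqxx.
Qed.

Lemma mul_bd (u : 'rV[rat]_#|V|) (i : 'I_#|A|) :
  (u *m (boundary_mx h t)^T) 0 i =
  u 0 (enum_rank (h (enum_val i))) - u 0 (enum_rank (t (enum_val i))).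
Proof.
rewrite mxE -!sum_delta -sumrB; apply: eq_bigr => j _.
by rewrite !mxE mulrBr.
Qed.

Lemma ker_const (u : 'rV[rat]_#|V|) : u *m (boundary_mx h t)^T = 0 ->
  forall v, u 0 (enum_rank v) = u 0 (enum_rank v0).
Proof.
move=> Hu.
have Ha : forall x y, adj x y -> u 0 (enum_rank x) = u 0 (enum_rank y).
  move=> x y /existsP [a Ha].
  have := congr1 (fun M : 'M[rat]_(1, #|A|) => M 0 (enum_rank a)) Hu; rewrite mul_bd mxE enum_rankK.
  move/eqP; rewrite subr_eq0 => /eqP E.
  by case/orP: Ha => /andP [/eqP <- /eqP <-].
move=> v; have /connectP [p Hp ->] := Hconn v0 v.
elim: p v0 Hp => [|y p IH] x //= /andP [Hxy Hp].
by rewrite (IH y Hp) (Ha _ _ Hxy).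
Qed.

Lemma rank_boundary : \rank (boundary_mx h t) = #|V|.-1.
Proof.
set B := boundary_mx h t.
pose one : 'rV[rat]_#|V| := const_mx 1.
have one0 : one *m B^T = 0.
  apply/rowP => i; rewrite mul_bd !mxE; by rewrite subrr.
have K1 : (kermx B^T == one)%MS.
  apply/andP; split; last by rewrite sub_kermx one0.
  apply/row_subP => i.
  have Hr : row i (kermx B^T) *m B^T = 0 by rewrite -row_mul mulmx_ker row0.
  have -> : row i (kermx B^T) = (row i (kermx B^T)) 0 (enum_rank v0) *: one.
    apply/rowP => j; rewrite !mxE mulr1.
    by have := ker_const Hr (enum_val j); rewrite enum_valK !mxE.
  by rewrite scalemx_sub.
have Hone : \rank one = 1%N.
  rewrite rank_rV; apply/eqP; rewrite eqb1; apply/eqP => E.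
  by have := congr1 (fun M : 'M[rat]_(1, #|V|) => M 0 (enum_rank v0)) E; rewrite !mxE => /eqP; rewrite oner_eq0.
have := mxrank_ker B^T; rewrite (eqmxP K1) Hone mxrank_tr.
have := rank_leq_col B.
move=> H1 H2. lia.
Qed.

Section Gauge.
Context (n : nat).
Local Notation M := ('M[C]_n).

Lemma dep_ind (P : V -> Prop) :
  (forall v, (forall w, (dep w < dep v)%N -> P w) -> P v) -> forall v, P v.
Proof.
move=> H v; move Ek: (dep v) => k; elim/ltn_ind: k v Ek => k IH v Ek.
apply: H => w Hw; apply: (IH (dep w)) => //; by rewrite -Ek.
Qed.

Lemma mKV (P Q : M) : Q \in unitmx -> P *m invmx Q *m Q = P.
Proof. by move=> uQ; rewrite -mulmxA mulVmx // mulmx1. Qed.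
Lemma mK (P Q : M) : Q \in unitmx -> P *m Q *m invmx Q = P.
Proof. by move=> uQ; rewrite -mulmxA mulmxV // mulmx1. Qed.

Definition sv (X : A -> M) v : M :=
  match pa v with Some a => if h a == v then invmx (X a) else X a | None => 1%:M end.

Fixpoint holf (st : V -> M) k v : M :=
  if k is k'.+1 then (if v == v0 then 1%:M else holf st k' (par v) *m st v) else 1%:M.

Lemma holf_step st k v : (dep v < k)%N -> holf st k v = holf st k.+1 v.
Proof.
elim: k v => [//|k IH] v Hk /=.
case: eqP => // /eqP Hv; have /andP [_ Hd] := par_spec Hv.
rewrite IH //; exact: (leq_trans Hd).
Qed.

Lemma holf_stable st v j : holf st ((dep v).+1 + j) v = holf st (dep v).+1 v.
Proof.
elim: j => [|j IH]; first by rewrite addn0.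
by rewrite addnS -holf_step ?IH // ltnS leq_addr.
Qed.

Definition G (X : A -> M) v := holf (sv X) (dep v).+1 v.

Lemma G_eq X v : G X v = if v == v0 then 1%:M else G X (par v) *m sv X v.
Proof.
rewrite /G /=; case: eqP => // /eqP Hv.
have /andP [_ Hd] := par_spec Hv.
by rewrite -(subnK Hd) addnC holf_stable.
Qed.

Lemma G_v0 X : G X v0 = 1%:M.
Proof. by rewrite G_eq eqxx. Qed.

Definition unitX (X : A -> M) := forall a, X a \in unitmx.

Lemma sv_unit X v : unitX X -> sv X v \in unitmx.
Proof.
move=> HX; rewrite /sv; case: (pa v) => [a|]; last exact: unitmx1.
by case: ifP => _; rewrite ?unitmx_inv HX.
Qed.

Lemma G_unit X v : unitX X -> G X v \in unitmx.
Proof.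
move=> HX; elim/dep_ind: v => v IH; rewrite G_eq; case: eqP => [_|/eqP Hv].
  exact: unitmx1.
have /andP [_ Hd] := par_spec Hv.
by rewrite unitmx_mul IH // sv_unit.
Qed.

Lemma sv_reg v : regU (fun x : GLtup A n => sv (sval x) v).
Proof.
rewrite /sv; case: (pa v) => [a|]; last exact: regU_1.
case: (h a == v); [exact: (regU_inv (regU_entry n a)) | exact: (regU_entry n a)].
Qed.

Lemma holf_reg k v : regU (fun x : GLtup A n => holf (sv (sval x)) k v).
Proof.
elim: k v => [|k IH] v /=; first exact: regU_1.
case: eqP => _; first exact: regU_1.
exact: (@regU_mul _ _ (fun x : GLtup A n => holf (sv (sval x)) k (par v)) (fun x => sv (sval x) v) (IH _) (sv_reg v)).
Qed.

Lemma G_reg v : regU (fun x : GLtup A n => G (sval x) v).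
Proof. exact: holf_reg. Qed.

Definition act (g : V -> M) (X : A -> M) a := g (h a) *m X a *m invmx (g (t a)).

Lemma pa_cond v a : pa v = Some a -> pcond v a.
Proof. by rewrite /pa; case: pickP => // b Hb [<-]. Qed.

Lemma tree_trivial X a : unitX X -> a \in T -> act (G X) X a = 1%:M.
Proof.
move=> HX Ha; have /andP [Cv /eqP Pa] := child_spec Ha.
set v := child a in Cv Pa.
have Hc := pa_cond Pa; have Pn := par_neq Cv.
rewrite /act.
case/orP: Hc => /andP [/eqP E1 /eqP E2].
- rewrite E2 (G_eq X v) (negbTE Cv) /sv Pa E1 (negbTE Pn) mulmxV //.
  by rewrite unitmx_mul G_unit // HX.
- rewrite E2 (G_eq X v) (negbTE Cv) /sv Pa E1 E2 eqxx mKV // mulmxV //.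
  exact: G_unit.
Qed.

Lemma inv_uniq (P Q : M) : P \in unitmx -> P *m Q = 1%:M -> invmx P = Q.
Proof. by move=> uP E; rewrite -[invmx P]mulmx1 -E mulmxA mulVmx // mul1mx. Qed.

Lemma invmx3 (P Q R : M) : P \in unitmx -> Q \in unitmx -> R \in unitmx ->
  invmx (P *m Q *m invmx R) = R *m invmx Q *m invmx P.
Proof.
move=> uP uQ uR; apply: inv_uniq; first by rewrite !unitmx_mul uP uQ unitmx_inv.
by rewrite !mulmxA mKV // mK // mulmxV.
Qed.

Lemma G_act g X v : (forall w, g w \in unitmx) -> unitX X ->
  G (act g X) v = g v0 *m G X v *m invmx (g v).
Proof.
move=> Hg HX; elim/dep_ind: v => v IH.
rewrite !(G_eq _ v); case: eqP => [->|/eqP Hv].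
  by rewrite mulmx1 mulmxV.
have /andP [_ Hd] := par_spec Hv; have [a Pa Hc] := pa_spec Hv.
have Pn := par_neq Hv.
rewrite IH // /sv Pa /act.
case/orP: Hc => /andP [/eqP E1 /eqP E2].
- rewrite E1 E2 (negbTE Pn) !mulmxA mKV //.
- rewrite E1 E2 eqxx invmx3 // !mulmxA mKV //.
Qed.

Lemma conj_cancel (g0 Gh gh X gt Gt : M) : gh \in unitmx -> gt \in unitmx ->
  (g0 *m Gh *m invmx gh) *m (gh *m X *m invmx gt) *m (gt *m invmx Gt *m invmx g0)
  = g0 *m (Gh *m X *m invmx Gt) *m invmx g0.
Proof. by move=> uh ut; rewrite !mulmxA mKV // mKV. Qed.

End Gauge.
Section Main.
Context (n : nat).
Local Notation M := ('M[C]_n).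
Local Notation r := (b1 h t).

Lemma b1_eq : r = #|~: T|.
Proof.
rewrite /b1 rank_boundary -card_T.
have := cardsC T; lia.
Qed.

Definition e (i : 'I_r) : A := enum_val (cast_ord b1_eq i).

Lemma e_notT i : e i \notin T.
Proof. by have := enum_valP (cast_ord b1_eq i); rewrite inE. Qed.

Lemma e_inj : injective e.
Proof. by move=> i j /enum_val_inj /cast_ord_inj. Qed.

Lemma e_surj a : a \notin T -> exists i, e i = a.
Proof.
move=> Ha; have Ha' : a \in ~: T by rewrite inE.
exists (cast_ord (esym b1_eq) (enum_rank_in Ha' a)).
by rewrite /e cast_ordKV enum_rankK_in.
Qed.

Definition embedF (Y : 'I_r -> M) a : M :=
  if a \in T then 1%:M else if [pick i | e i == a] is Some i then Y i else 1%:M.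

Lemma embed_e Y i : embedF Y (e i) = Y i.
Proof.
rewrite /embedF (negbTE (e_notT i)); case: pickP => [j /eqP /e_inj -> //|H0].
by move: (H0 i); rewrite eqxx.
Qed.

Lemma embedF_unit (y : GLtup 'I_r n) a : embedF (sval y) a \in unitmx.
Proof.
rewrite /embedF; case: (a \in T); first exact: unitmx1.
case: pickP => [i _|_]; [exact: (svalP y i) | exact: unitmx1].
Qed.

Definition embed (y : GLtup 'I_r n) : GLtup A n :=
  exist _ (embedF (sval y)) (embedF_unit y).

Lemma Psi_unit (x : GLtup A n) i : act (G (sval x)) (sval x) (e i) \in unitmx.
Proof.
have HX : unitX (sval x) by exact: (svalP x).
by rewrite /act !unitmx_mul !G_unit // unitmx_inv G_unit // (svalP x).
Qed.

Definition Psi (x : GLtup A n) : GLtup 'I_r n :=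
  exist _ (fun i => act (G (sval x)) (sval x) (e i)) (Psi_unit x).

Lemma sig_eq (I : Type) (F1 F2 : I -> M) p1 p2 : F1 = F2 ->
  exist (fun x : I -> M => forall i, x i \in unitmx) F1 p1 = exist _ F2 p2.
Proof. by move=> E; subst F2; f_equal; apply: proof_irrelevance. Qed.

Lemma gauge_embed (X : A -> M) a : unitX X ->
  act (G X) X a = embedF (fun i => act (G X) X (e i)) a.
Proof.
move=> HX; case Ha: (a \in T).
  by rewrite /embedF Ha tree_trivial.
have [i <-] := e_surj (negbT Ha); by rewrite embed_e.
Qed.

Lemma G_embed Y v : G (embedF Y) v = 1%:M.
Proof.
elim/dep_ind: v => v IH; rewrite G_eq; case: eqP => // /eqP Hv.
have /andP [_ Hd] := par_spec Hv; have [a Pa _] := pa_spec Hv.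
have Ha : a \in T by rewrite inE; apply/existsP; exists v; rewrite Hv Pa eqxx.
rewrite IH // mul1mx /sv Pa /embedF Ha; case: (h a == v) => //; exact: invmx1.
Qed.

Definition phi (f : GLtup A n -> C) : GLtup 'I_r n -> C := fun y => f (embed y).

Lemma iso_ex : calg_iso (@quiver_inv_fun V A h t n) (@charvar_fun r n) phi.
Proof.
split.
- move=> f [Hreg Hinv]; split.
    apply: (reg_comp (Phi := embed)) => // a.
    rewrite /embed /embedF /=; case: (a \in T); first exact: regU_1.
    case: pickP => [i _|_]; [exact: (regU_entry n i) | exact: regU_1].
  move=> g y Hg hy; rewrite /phi.
  have hy' : forall a, (g *m sval (embed y) a *m invmx g) \in unitmx.
    by move=> a; rewrite !unitmx_mul Hg unitmx_inv Hg (svalP (embed y) a).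
  rewrite -(Hinv (fun _ => g) (embed y) (fun _ => Hg) hy'); congr f.
  apply: sig_eq; apply: functional_extensionality => a /=.
  rewrite /embedF; case: (a \in T); first by rewrite mulmx1 mulmxV.
  case: pickP => [i _|_] //; by rewrite mulmx1 mulmxV.
- move=> f1 f2 [_ H1] [_ H2] E; apply: functional_extensionality => x.
  have HX : unitX (sval x) by exact: (svalP x).
  have HG : forall v, G (sval x) v \in unitmx by move=> v; exact: G_unit.
  have hy : forall a, (G (sval x) (h a) *m sval x a *m invmx (G (sval x) (t a))) \in unitmx.
    by move=> a; rewrite !unitmx_mul HG HX unitmx_inv HG.
  have Ex : exist (fun X : A -> M => forall a, X a \in unitmx)
              (fun a => G (sval x) (h a) *m sval x a *m invmx (G (sval x) (t a))) hy
            = embed (Psi x).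
    by apply: sig_eq; apply: functional_extensionality => a; exact: gauge_embed.
  rewrite -(H1 _ x HG hy) -(H2 _ x HG hy) Ex.
  exact: (congr1 (fun F => F (Psi x)) E).
- move=> F [HregF HinvF]; exists (fun x => F (Psi x)).
    split.
      apply: (reg_comp (Phi := Psi)) => // i.
      rewrite /Psi /act /=.
      apply: (@regU_mul _ _ (fun x : GLtup A n => G (sval x) (h (e i)) *m sval x (e i))
                (fun x => invmx (G (sval x) (t (e i))))).
        exact: (@regU_mul _ _ (fun x : GLtup A n => G (sval x) (h (e i))) (fun x => sval x (e i)) (G_reg _ _) (regU_entry n (e i))).
      exact: (@regU_inv _ _ (fun x : GLtup A n => G (sval x) (t (e i))) (G_reg _ _)).
    move=> g x Hg hy /=.
    have HX : unitX (sval x) by exact: (svalP x).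
    have hy2 : forall i, (g v0 *m sval (Psi x) i *m invmx (g v0)) \in unitmx.
      by move=> i; rewrite !unitmx_mul !unitmx_inv !G_unit // Hg HX.
    rewrite -(HinvF (g v0) (Psi x) (Hg v0) hy2); congr F.
    apply: sig_eq; apply: functional_extensionality => i /=.
    change (act (G (act g (sval x))) (act g (sval x)) (e i) =
            g v0 *m act (G (sval x)) (sval x) (e i) *m invmx (g v0)).
    rewrite {1}/act !(G_act _ Hg HX) invmx3 ?G_unit //.
    rewrite /act; exact: conj_cancel.
  apply: functional_extensionality => y; rewrite /phi; congr F.
  case: y => Y pY; apply: sig_eq; apply: functional_extensionality => i /=.
  by rewrite /act !G_embed invmx1 mulmx1 mul1mx embed_e.
- by [].
- by [].
Qed.

End Main.

End Tree.

Theorem corollary5p2 (V A : finType) (h t : A -> V) (n : nat) :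
  quiver_connected h t ->
  exists phi : (GLtup A n -> C) -> (GLtup 'I_(b1 h t) n -> C),
    calg_iso (@quiver_inv_fun V A h t n) (@charvar_fun (b1 h t) n) phi.
Proof.
case=> Hc Hconn; case/card_gt0P: Hc => v0 _.
eexists; exact: (@iso_ex _ _ h t v0 Hconn n).
Qed.
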